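(* Let $O^4$ be the set of odd-parity 4-bit strings, let $u\in O^4$ and let $u'$ be its bitwise complement ($u\oplus u'=1111$). Let $n\ge1$ and let four parties (the first being Alice) hold $X_j=(x^j_1,\dots,x^j_n)\in\{0,1\}^n$, $j=1,\dots,4$, under the promise that $x_i^1x_i^2x_i^3x_i^4\in A$ for all $i$, where $A\subseteq O^4$ is any fixed set. Let $f_{\{u,u'\}}(X_1,X_2,X_3,X_4)=\bigoplus_{i=1}^n\big(t_u(x_i^1x_i^2x_i^3x_i^4)\oplus t_{u'}(x_i^1x_i^2x_i^3x_i^4)\big)$, where $t_w(y)=1$ if $y=w$ and $0$ otherwise. Suppose the parties share $n$ copies of $|\psi_4\rangle=2^{-3/2}\big(\sum_{|v|=1}|v\rangle-\sum_{|v|=3}|v\rangle\big)$ ($v\in\{0,1\}^4$, $|v|$ the Hamming weight), the $j$-th qubit of each copy held by party $j$. Then, using local operations in which party $j$ applies $H$ to its qubit of the $i$-th copy if $x_i^j\ne u_j$ and the identity otherwise, followed by computational-basis measurements and local classical computation, Alice can obtain $f_{\{u,u'\}}(X_1,X_2,X_3,X_4)$ with only three classical bits of communication in total.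
   Context: $H$ is the Hadamard gate. Communication consists only of classical bits sent to Alice; no quantum communication is allowed. *)

(* Defs.v *)
From HB Require Import structures.
From mathcomp Require Import all_boot all_order all_algebra.
From mathcomp Require Import Rstruct.
Set Implicit Arguments. Unset Strict Implicit. Unset Printing Implicit Defensive.
Import Order.TTheory GRing.Theory Num.Theory.
Local Open Scope ring_scope.

Notation RR := Rdefinitions.R.

(* 4-bit strings; bit j belongs to party j (party 0 = Alice). *)
Definition bits4 := {ffun 'I_4 -> bool}.

Definition weight (v : bits4) : nat := #|[pred j | v j]|.
Definition odd4 (v : bits4) : bool := odd (weight v).

Definition compl4 (u : bits4) : bits4 := [ffun j => ~~ u j].

Definition t (w y : bits4) : bool := y == w.

Definition column n (X : 'I_4 -> 'I_n -> bool) (i : 'I_n) : bits4 :=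
  [ffun j => X j i].

Definition f_uu n (u : bits4) (X : 'I_4 -> 'I_n -> bool) : bool :=
  \big[addb/false]_(i < n) (t u (column X i) (+) t (compl4 u) (column X i)).

Definition psi4 (v : bits4) : RR :=
  if weight v == 1%N then (2 * Num.sqrt 2)^-1
  else if weight v == 3%N then - (2 * Num.sqrt 2)^-1
  else 0.

(* matrix entry <b| H |a> of the Hadamard gate *)
Definition hadamard (a b : bool) : RR :=
  (if a && b then -1 else 1) / Num.sqrt 2.

Definition gate (applyH : bool) (a b : bool) : RR :=
  if applyH then hadamard a b else (a == b)%:R.

(* Amplitude of computational-basis outcome m on one copy of psi4, after
   party j applies H iff y_j <> u_j (the local operations of the protocol). *)
Definition copy_amp (u y m : bits4) : RR :=
  \sum_(v : bits4) (\prod_(j < 4) gate (y j != u j) (v j) (m j)) * psi4 v.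

(* Probability that, on the n-copy product state with inputs X, the
   computational-basis measurements give outcomes M (M j i = outcome of
   party j on its qubit of copy i). The amplitude of the tensor-product
   state is the product of the per-copy amplitudes. *)
Definition outcome_prob n (u : bits4) (X M : 'I_4 -> 'I_n -> bool) : RR :=
  \prod_(i < n) (copy_amp u (column X i) (column M i)) ^+ 2.

(* Main.v *)
Require Import Defs.
From HB Require Import structures.
From mathcomp Require Import all_boot all_order all_algebra.
From mathcomp Require Import Rstruct ring.
Import Order.TTheory GRing.Theory Num.Theory.
Local Open Scope ring_scope.
Definition mk (p : bool * bool * bool * bool) : bits4 :=
  let: (a,b,c,d) := p in [ffun j : 'I_4 => nth false [:: a; b; c; d] j].
Definition unmk (v : bits4) : bool * bool * bool * bool :=
  (v ord0, v (inord 1), v (inord 2), v (inord 3)).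
Lemma mkK : cancel unmk mk.
Proof.
move=> v; apply/ffunP=> j; rewrite ffunE.
case: j => [[|[|[|[|j]]]] Hj] //=; congr (v _); apply/val_inj; by rewrite /= ?inordK.
Qed.
Lemma unmkK : cancel mk unmk.
Proof. case=> [[[a b] c] d]; rewrite /unmk !ffunE /= !inordK //. Qed.
Lemma w (a b c d : bool) : weight (mk (a,b,c,d)) = (a + b + c + d)%N.
Proof.
rewrite /weight -sum1_card big_mkcond /= !big_ord_recl big_ord0 /= !inE !ffunE /=.
by case: a; case: b; case: c; case: d.
Qed.
Lemma sum_bits4 (F : bits4 -> RR) :
  \sum_(v : bits4) F v = \sum_(a : bool) \sum_(b : bool) \sum_(c : bool) \sum_(d : bool) F (mk (a,b,c,d)).
Proof.
rewrite (reindex mk) /=; last by exists unmk => x _; [apply: unmkK | apply: mkK].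
symmetry; rewrite !pair_bigA; apply: eq_bigr; by case=> [[[a b] c] d].
Qed.
Definition amp (s m : bits4) : RR :=
  \sum_(v : bits4) (\prod_(j < 4) gate (s j) (v j) (m j)) * psi4 v.
Lemma key (s0 s1 s2 s3 m0 m1 m2 m3 : bool) : ~~ odd (s0+s1+s2+s3) ->
  amp (mk (s0,s1,s2,s3)) (mk (m0,m1,m2,m3)) != 0 ->
  odd (m0+m1+m2+m3) = [&& ~~s0, ~~s1, ~~s2 & ~~s3] || [&& s0, s1, s2 & s3].
Proof.
rewrite /amp sum_bits4 !big_bool /= !big_ord_recl !big_ord0 !ffunE /= /psi4 !w /=.
rewrite /gate /hadamard.
case: s0; case: s1; case: s2; case: s3; case: m0; case: m1; case: m2; case: m3 => //= _;
 apply: contraNeq => _; apply/eqP; ring.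
Qed.

Lemma mk_inj : injective mk. Proof. exact: can_inj unmkK. Qed.

Lemma weightE (v : bits4) :
  weight v = (v ord0 + v (inord 1) + v (inord 2) + v (inord 3))%N.
Proof. by rewrite -{1}(mkK v) /unmk w. Qed.

Lemma copy_parity u y m : odd4 u -> odd4 y -> copy_amp u y m != 0 ->
  odd4 m = t u y (+) t (compl4 u) y.
Proof.
rewrite -(mkK u) -(mkK y) -(mkK m).
move: (unmk u) (unmk y) (unmk m) => [[[u0 u1] u2] u3] [[[y0 y1] y2] y3] [[[m0 m1] m2] m3].
have -> : copy_amp (mk (u0,u1,u2,u3)) (mk (y0,y1,y2,y3)) (mk (m0,m1,m2,m3)) =
   amp (mk (y0 != u0, y1 != u1, y2 != u2, y3 != u3)) (mk (m0,m1,m2,m3)).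
  rewrite /copy_amp /amp; apply: eq_bigr => v _; congr (_ * _).
  apply: eq_bigr => j _; congr (gate _ _ _); rewrite !ffunE.
  by case: j => [[|[|[|[|j]]]] Hj].
have -> : compl4 (mk (u0,u1,u2,u3)) = mk (~~u0, ~~u1, ~~u2, ~~u3).
  apply/ffunP => j; rewrite !ffunE; by case: j => [[|[|[|[|j]]]] Hj].
rewrite /odd4 /t !w !(inj_eq mk_inj) => Hu Hy /(key _) H.
rewrite H; last by clear H; move: Hu Hy; case: u0; case: u1; case: u2; case: u3;
  case: y0; case: y1; case: y2; case: y3.
by clear H Hu Hy; case: u0; case: u1; case: u2; case: u3; case: y0; case: y1; case: y2; case: y3.
Qed.

Theorem corollary1 (u : bits4) (A : {set bits4}) (n : nat) :
  odd4 u ->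
  (forall a, a \in A -> odd4 a) ->
  (0 < n)%N ->
  exists (k1 k2 k3 : nat), (k1 + k2 + k3 = 3)%N /\
  exists (g1 : ('I_n -> bool) -> ('I_n -> bool) -> k1.-tuple bool)
         (g2 : ('I_n -> bool) -> ('I_n -> bool) -> k2.-tuple bool)
         (g3 : ('I_n -> bool) -> ('I_n -> bool) -> k3.-tuple bool)
         (dec : ('I_n -> bool) -> ('I_n -> bool) ->
                k1.-tuple bool -> k2.-tuple bool -> k3.-tuple bool -> bool),
  forall X M : 'I_4 -> 'I_n -> bool,
    (forall i : 'I_n, column X i \in A) ->
    outcome_prob u X M != 0 ->
    dec (X ord0) (M ord0)
        (g1 (X (inord 1)) (M (inord 1)))
        (g2 (X (inord 2)) (M (inord 2)))
        (g3 (X (inord 3)) (M (inord 3)))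
    = f_uu u X.
Proof.
move=> Hu HA _.
pose g := fun (_ : 'I_n -> bool) (m : 'I_n -> bool) => [tuple \big[addb/false]_(i < n) m i].
exists 1%N, 1%N, 1%N; split => //.
exists g, g, g.
exists (fun _ m t1 t2 t3 => \big[addb/false]_(i < n) m i (+) thead t1 (+) thead t2 (+) thead t3).
move=> X M HX Hp.
rewrite /f_uu.
transitivity (\big[addb/false]_(i < n) odd4 (column M i)).
  rewrite /odd4 [RHS](eq_bigr (fun i => M ord0 i (+) M (inord 1) i (+) M (inord 2) i (+) M (inord 3) i)); last first.
    by move=> i _; rewrite weightE !ffunE !oddD !oddb.
  by rewrite !big_split /= /g !theadE.
apply: eq_bigr => i _; apply: copy_parity => //; first exact: HA.
apply/negP => /eqP H0; move: Hp; rewrite /outcome_prob (bigD1 i) //= H0.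
by rewrite expr0n /= mul0r eqxx.
Qed.
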